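(* Let $\mathcal N$ be a finite set, $q$ a prime power, and $h\in\mathcal H[\mathcal N]$ almost $q$-representable. Let $\Delta=\{(k,\alpha):k\in\mathcal N,\ \alpha\subseteq\mathcal N,\ h(k\mid\alpha)=0\}$. Then there exists a sequence of weakly $q$-representable functions $h^\ell\in\mathcal H[\mathcal N]$ such that $\lim_{\ell\to\infty}h^\ell=h$ and $h^\ell(k\mid\alpha)=0$ for all positive integers $\ell$ and all $(k,\alpha)\in\Delta$.
   Context: $\mathcal H[\mathcal N]$ is the set of real functions on subsets of $\mathcal N$, with $h(\alpha\mid\beta)=h(\alpha\cup\beta)-h(\beta)$ and singletons identified with elements. $h$ is $q$-representable if there are subspaces $\mathbb U_i$ ($i\in\mathcal N$) of a finite-dimensional vector space over $GF(q)$ with $h(\alpha)=\dim\langle\mathbb U_i:i\in\alpha\rangle$ (dimension of the span) for every $\alpha\subseteq\mathcal N$; weakly $q$-representable if $ch$ is $q$-representable for some $c>0$; almost $q$-representable if it is the limit of a sequence of weakly $q$-representable functions. (In the paper $\mathcal N=\mathcal S\cup\mathcal E$ for a network coding problem.) *)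

(* Defs.v *)
From HB Require Import structures.
From mathcomp Require Import all_boot all_order all_algebra.
From mathcomp Require Import all_classical all_reals all_analysis.
Set Implicit Arguments. Unset Strict Implicit. Unset Printing Implicit Defensive.
Import Order.TTheory GRing.Theory Num.Theory.
Local Open Scope ring_scope.
Local Open Scope classical_set_scope.
Import numFieldNormedType.Exports.

(* Ground set N is a finite type T; H[N] = functions {set T} -> R. *)

Definition prime_power (q : nat) : Prop :=
  exists p k : nat, prime p /\ (0 < k)%N /\ q = (p ^ k)%N.

Definition hcond (R : realType) (T : finType) (h : {set T} -> R) (k : T) (A : {set T}) : R :=
  h (k |: A) - h A.

(* h is q-representable: subspaces U_i of a finite-dimensional vector space
   F^n over a field F with q elements (= GF(q)); each subspace is the row
   space of an n x n matrix, and h(A) = dim of the span of the U_i, i in A. *)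
Definition q_representable (R : realType) (T : finType) (q : nat) (h : {set T} -> R) : Prop :=
  exists (F : finFieldType) (n : nat) (U : T -> 'M[F]_n),
    #|F| = q /\ forall A : {set T}, h A = (\rank (\sum_(i in A) U i)%MS)%:R.

Definition weakly_q_representable (R : realType) (T : finType) (q : nat) (h : {set T} -> R) : Prop :=
  exists c : R, 0 < c /\ q_representable q (fun A => c * h A).

Definition converges_to (R : realType) (T : finType) (hs : nat -> {set T} -> R) (h : {set T} -> R) : Prop :=
  forall A : {set T}, (fun l : nat => hs l A) @ \oo --> h A.

Definition almost_q_representable (R : realType) (T : finType) (q : nat) (h : {set T} -> R) : Prop :=
  exists hs : nat -> {set T} -> R,
    (forall l, weakly_q_representable q (hs l)) /\ converges_to hs h.

(* Main.v *)
Require Import Defs.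
From HB Require Import structures.
From mathcomp Require Import all_boot all_order all_algebra.
Import Order.TTheory GRing.Theory Num.Theory.
From mathcomp Require Import all_classical all_reals all_analysis.
Local Open Scope ring_scope.

Definition SU (F : fieldType) n (T : finType) (U : T -> 'M[F]_n) (A : {set T}) : 'M[F]_n :=
  (\sum_(i in A) U i)%MS.
Arguments SU {F n T} U A.

Lemma SU_sub1 (F : fieldType) n (T : finType) (U : T -> 'M[F]_n) k A :
  (U k <= SU U (k |: A))%MS.
Proof. exact: (sumsmx_sup k) (setU11 k A) (submx_refl _). Qed.

Lemma SU_subA (F : fieldType) n (T : finType) (U : T -> 'M[F]_n) k A :
  (SU U A <= SU U (k |: A))%MS.
Proof.
apply/sumsmx_subP => i iA; apply: (sumsmx_sup i); last exact: submx_refl.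
by rewrite setU1r.
Qed.

Lemma SU_U1 (F : fieldType) n (T : finType) (U : T -> 'M[F]_n) k A :
  (SU U (k |: A) <= U k + SU U A)%MS.
Proof.
apply/sumsmx_subP => i; rewrite in_setU1 => /orP[/eqP->|iA]; first exact: addsmxSl.
exact: submx_trans (sumsmx_sup i iA (submx_refl _)) (addsmxSr _ _).
Qed.

Lemma diff_rank (F : fieldType) n (T : finType) (U : T -> 'M[F]_n) k A :
  (\rank (U k :\: SU U A) + \rank (SU U A) <= \rank (SU U (k |: A)))%N.
Proof.
rewrite -mxrank_disjoint_sum ?capmx_diff //; apply: mxrankS.
by rewrite addsmx_sub (submx_trans (diffmxSl _ _) (SU_sub1 _ _ _ _ _ _)) SU_subA.
Qed.

Arguments diff_rank {F n T} U k A.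

Lemma rank_coker_mul (F : fieldType) n m (X : 'M[F]_(m, n)) (D : 'M[F]_n) :
  (\rank (X *m cokermx D) + \rank D)%N = \rank (X + D)%MS.
Proof.
have e1 : (X *m cokermx D :=: (X + D)%MS *m cokermx D)%MS.
  apply/eqmxP/andP; split; first by rewrite submxMr // addsmxSl.
  by rewrite addsmxMr addsmx_sub submx_refl mulmx_coker sub0mx.
have eK : (kermx (cokermx D) :=: D)%MS.
  apply/eqmxP/andP; split; first by rewrite submxE -sub_kermx submx_refl.
  by rewrite sub_kermx mulmx_coker.
have e2 : ((X + D)%MS :&: kermx (cokermx D) :=: D)%MS.
  apply: eqmx_trans (cap_eqmx (eqmx_refl _) eK) _.
  by apply/capmx_idPr; rewrite addsmxSr.
by rewrite e1 -e2 mxrank_mul_ker.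
Qed.

Lemma rank_sums_le (F : fieldType) n (I : finType) (P : pred I) (B : I -> 'M[F]_n) :
  (\rank (\sum_(i | P i) B i)%MS <= \sum_(i | P i) \rank (B i))%N.
Proof.
elim/big_rec2: _ => [|i y M Pi IH]; first by rewrite mxrank0.
apply: leq_trans (mxrank_adds_leqif _ _) _; by rewrite leq_add2l.
Qed.

Lemma key (F : fieldType) n (T : finType) (U : T -> 'M[F]_n) (P : pred (T * {set T})) :
  exists V : T -> 'M[F]_n,
   [/\ forall A, (\rank (SU V A) <= \rank (SU U A))%N,
       forall A, (\rank (SU U A) <= \rank (SU V A) +
          \sum_(p | P p) (\rank (SU U (p.1 |: p.2)) - \rank (SU U p.2)))%N &
       forall k A, P (k, A) -> \rank (SU V (k |: A)) = \rank (SU V A)].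
Proof.
pose D := (\sum_(p | P p) (U p.1 :\: SU U p.2))%MS.
exists (fun i => U i *m cokermx D).
have eV A : \rank (SU (fun i => U i *m cokermx D) A) = \rank (SU U A *m cokermx D).
  by by rewrite (sumsmxMr _ _ (cokermx D)).
have rD : (\rank D <= \sum_(p | P p) (\rank (SU U (p.1 |: p.2)) - \rank (SU U p.2)))%N.
  apply: leq_trans (rank_sums_le _ _ _ _ _) _; apply: leq_sum => p _.
  have H := diff_rank U p.1 p.2; rewrite leq_subRL; [by rewrite addnC | exact: leq_trans (leq_addl _ _) H].
split.
- move=> A; rewrite eV -(leq_add2r (\rank D)) rank_coker_mul.
  exact: mxrank_adds_leqif.
- move=> A; rewrite eV; apply: leq_trans (leq_add (leqnn _) rD).
  rewrite rank_coker_mul; apply: mxrankS; exact: addsmxSl.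
- move=> k A Pk; apply/eqP; rewrite !eV -(eqn_add2r (\rank D)) !rank_coker_mul.
  rewrite eqn_leq; apply/andP; split; apply: mxrankS; last by rewrite addsmxS ?SU_subA.
  rewrite addsmx_sub addsmxSr andbT (submx_trans (SU_U1 _ _ _ _ _ _)) //.
  rewrite addsmx_sub addsmxSl andbT.
  rewrite -(addsmx_diff_cap_eq (U k) (SU U A)) addsmxC addsmxS ?capmxSr //.
  exact: (sumsmx_sup (k, A)) Pk (submx_refl _).
Qed.

Arguments key {F n T} U P.
Arguments SU_subA {F n T} U k A.
Import numFieldNormedType.Exports.

Lemma step (R : realType) (T : finType) (q : nat) (P : pred (T * {set T}))
  (hl : {set T} -> R) : weakly_q_representable q hl ->
  exists g : {set T} -> R, weakly_q_representable q g /\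
    (forall A, `|g A - hl A| <= \sum_(p | P p) hcond hl p.1 p.2) /\
    (forall k A, P (k, A) -> hcond g k A = 0).
Proof.
case=> c [c0 [F [n [U [cardF Hc]]]]].
have [V [h1 h2 h3]] := key U P.
have cn0 : c != 0 by rewrite gt_eqF.
have eh B : hl B = (\rank (SU U B))%:R / c by rewrite -Hc mulrC mulKf.
exists (fun A => (\rank (SU V A))%:R / c); split; [|split].
- exists c; split => //; exists F, n, V; split => // A.
  by rewrite mulrC divfK.
- move=> A; rewrite eh -mulrBl.
  under eq_bigr do rewrite /hcond !eh -mulrBl.
  rewrite -mulr_suml normrM (gtr0_norm (_ : 0 < c^-1)) ?invr_gt0 // ler_pM2r ?invr_gt0 //.
  rewrite distrC ger0_norm ?subr_ge0 ?ler_nat ?h1 //.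
  under eq_bigr do rewrite -natrB ?mxrankS ?SU_subA //.
  by rewrite -natr_sum lerBlDr -natrD ler_nat addnC h2.
- move=> k A PkA; rewrite /hcond h3 // subrr //.
Qed.

Theorem proposition5 (R : realType) (T : finType) (q : nat) (h : {set T} -> R) :
  prime_power q -> almost_q_representable q h ->
  exists hs : nat -> {set T} -> R,
    (forall l, weakly_q_representable q (hs l)) /\
    converges_to hs h /\
    (forall (l : nat) (k : T) (A : {set T}), hcond h k A = 0 -> hcond (hs l) k A = 0).
Proof.
move=> _ [hs [Whs Chs]].
pose P := fun p : T * {set T} => hcond h p.1 p.2 == 0.
have := fun l => @step R T q P (hs l) (Whs l).
case/choice => g Hg.
exists g; split; [by move=> l; case: (Hg l)|split]; last first.
  by move=> l k A /eqP hz; case: (Hg l) => _ [_ ->].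
move=> A.
have Sc : ((fun l => \sum_(p | P p) hcond (hs l) p.1 p.2) @ \oo --> 0)%classic.
  have e : \sum_(p | P p) hcond h p.1 p.2 = 0.
    by rewrite big1 // => p /eqP.
  have HH := (@cvg_big R _ +%R 0 P add_continuous nat (\oo)%classic (index_enum _) (fun p l => hcond (hs l) p.1 p.2) (fun p => hcond h p.1 p.2) eventually_filter).
  rewrite e in HH; apply: HH.
  move=> p _; apply: cvgB; exact: Chs.
have Dc : ((fun l => g l A - hs l A) @ \oo --> 0)%classic.
  apply: (@squeeze_cvgr _ _ _ _ (fun l => - \sum_(p | P p) hcond (hs l) p.1 p.2)
     (fun l => \sum_(p | P p) hcond (hs l) p.1 p.2)).
  - apply: nearW => l; rewrite -ler_norml; by case: (Hg l) => _ [->].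
  - have HN := cvgN Sc; rewrite oppr0 in HN; exact: HN.
  - exact: Sc.
have -> : h A = h A + 0 by rewrite addr0.
have -> : (fun l => g l A) = (fun l => hs l A + (g l A - hs l A)).
  by apply: funext => l; rewrite addrC subrK.
by apply: cvgD; [exact: Chs | exact: Dc].
Qed.
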